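(* Let $n,a,h,t$ be positive integers with $h\le n$ and $a\le t\le ah$. The code $$\mathcal C(n;t)=\Big\{\mathbf x\in\mathbb Z^n:\ \sum_{i=1}^n x_i\equiv 0 \pmod{t+1}\Big\}$$ is an $(a,h,t)$-AED code in $\mathbb Z^n$, its density equals $\mu(\mathcal C(n;t))=\frac{1}{t+1}$, and it is optimal: no $(a,h,t)$-AED code in $\mathbb Z^n$ has upper density larger than $\frac{1}{t+1}$.
   Context: Channel over the alphabet $\mathbb Z$: an input $\mathbf x=(x_1,\dots,x_n)\in\mathbb Z^n$ can produce any output $\mathbf y\in\mathbb Z^n$ satisfying (1) $0\le y_i-x_i\le a$ for all $i$; (2) $\sum_{i=1}^n \mathbb 1_{\{y_i\ne x_i\}}\le h$; (3) $\sum_{i=1}^n (y_i-x_i)\le t$. $\mathrm{Out}(\mathbf x)$ denotes the set of all such outputs $\mathbf y$. A code $\mathcal C\subseteq\mathbb Z^n$ is an $(a,h,t)$-AED code if for all $\mathbf x\in\mathcal C$ and all $\mathbf y\in\mathrm{Out}(\mathbf x)$ with $\mathbf y\neq\mathbf x$, we have $\mathbf y\notin\mathcal C$. The density of $\mathcal C\subseteq\mathbb Z^n$ is $\mu(\mathcal C)=\lim_{k\to\infty}\frac{|\mathcal C\cap\{-k,\dots,k\}^n|}{(2k+1)^n}$ when the limit exists; the upper density $\overline{\mu}(\mathcal C)$ is defined with $\limsup$ in place of $\lim$. *)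

(* Defs.v *)
From HB Require Import structures.
From mathcomp Require Import all_boot all_order all_algebra.
From Stdlib Require Import Reals.
Set Implicit Arguments. Unset Strict Implicit. Unset Printing Implicit Defensive.
Import GRing.Theory Num.Theory.
Local Open Scope ring_scope.

Definition vec (n : nat) := {ffun 'I_n -> int}.

Definition Out (n a h t : nat) (x y : vec n) : Prop :=
  (forall i : 'I_n, (0 <= y i - x i) /\ (y i - x i <= Posz a)) /\
  leq #|[pred i : 'I_n | y i != x i]| h /\
  (\sum_(i < n) (y i - x i) <= Posz t).

Definition AED (n a h t : nat) (C : pred (vec n)) : Prop :=
  forall x y : vec n, C x -> Out a h t x y -> y != x -> ~~ C y.

Definition Cnt (n t : nat) : pred (vec n) :=
  fun x => (\sum_(i < n) x i) \in dvdz (Posz t.+1).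

Arguments Cnt : clear implicits.

(* |C ∩ {-k,...,k}^n| : points of the box are f - k with f : 'I_n -> 'I_(2k+1). *)
Definition box_count (n : nat) (C : pred (vec n)) (k : nat) : nat :=
  #|[pred f : {ffun 'I_n -> 'I_(k.*2.+1)} |
      C [ffun i => Posz (f i) - Posz k]]|.

Definition box_ratio (n : nat) (C : pred (vec n)) (k : nat) : R :=
  Rdiv (INR (box_count C k)) (INR (expn k.*2.+1 n)).

Definition has_density (n : nat) (C : pred (vec n)) (d : R) : Prop :=
  Un_cv (box_ratio C) d.

Definition is_limsup (u : nat -> R) (L : R) : Prop :=
  exists S : nat -> R,
    (forall N : nat, is_lub (fun r => exists k : nat, le N k /\ r = u k) (S N))
    /\ Un_cv S L.

Definition is_upper_density (n : nat) (C : pred (vec n)) (d : R) : Prop :=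
  is_limsup (box_ratio C) d.

(* Main.v *)
Require Import Defs.
From HB Require Import structures.
From mathcomp Require Import all_boot all_order all_algebra.
From mathcomp Require Import zify.
From Stdlib Require Import Reals Lra.
From mathcomp Require Import all_boot.
Set Implicit Arguments. Unset Strict Implicit. Unset Printing Implicit Defensive.
Import Order.TTheory GRing.Theory Num.Theory.

Lemma inj_card (T T' : finType) (A : pred T) (B : pred T') (f : T -> T') :
  {in A &, injective f} -> (forall x, A x -> B (f x)) -> #|A| <= #|B|.
Proof.
move=> inj sub.
have -> : #|A| = #|f @: [set x | A x]|.
  rewrite card_in_imset; first by apply: eq_card => x; rewrite inE.
  by move=> x y; rewrite !inE; apply: inj.
apply: subset_leq_card; apply/subsetP => y /imsetP [x]; rewrite inE => Ax ->.
exact: sub.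
Qed.

Lemma union_bound (I T : finType) (P : pred I) (Q : I -> pred T) :
  #|[pred x | [exists i, P i && Q i x]]| <= \sum_(i | P i) #|Q i|.
Proof.
rewrite -sum1_card.
have -> : \sum_(i | P i) #|Q i| = \sum_(i | P i) \sum_(x | Q i x) 1.
  by apply: eq_bigr => i _; rewrite sum1_card.
rewrite (exchange_big_dep predT) //=.
rewrite big_mkcond /=; apply: leq_sum => x _.
case: ifP => //; rewrite inE => /existsP [i /andP [Pi Qi]].
rewrite (bigD1 i) ?Pi //= Qi; exact: leq_addr.
Qed.

Lemma card_coord (n m : nat) (i0 : 'I_n) (P : pred 'I_m) :
  #|[pred f : {ffun 'I_n -> 'I_m} | P (f i0)]| = #|P| * m ^ n.-1.
Proof.
pose F := fun i : 'I_n => if i == i0 then P else predT.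
have -> : #|[pred f : {ffun 'I_n -> 'I_m} | P (f i0)]| = #|(family F : simpl_pred {ffun 'I_n -> 'I_m})|.
  apply: eq_card => f; rewrite !inE; apply/idP/familyP.
    by move=> Pf i; rewrite /F; case: eqP => [->|] .
  by move=> /(_ i0); rewrite /F eqxx.
rewrite card_family foldrE big_map big_enum /= (bigD1 i0) //= /F eqxx; congr (_ * _).
rewrite (eq_bigr (fun _ => m)); last by move=> i /negbTE ->; rewrite card_ord.
rewrite prod_nat_const; congr (_ ^ _).
rewrite cardC1 card_ord //.
Qed.

Definition vn (n a h j : nat) (l : 'I_n) : nat :=
  if (l < h)%N then minn a (j - a * l) else 0.

Lemma vn_le n a h j l : (@vn n a h j l <= a)%N.
Proof. rewrite /vn; case: ifP => _; lia. Qed.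

Lemma vn_mono n a h i j l : (i <= j)%N -> (@vn n a h i l <= vn a h j l)%N.
Proof. rewrite /vn; case: ifP => _; lia. Qed.

Lemma vn_supp n a h j l : (@vn n a h j l != 0)%N -> (l < h)%N.
Proof. rewrite /vn; case: ifP => //; by rewrite eqxx. Qed.

Lemma sum_min a j h : \sum_(0 <= l < h) minn a (j - a * l) = minn j (a * h).
Proof.
elim: h => [|h IH]; first by rewrite big_geq //; lia.
rewrite big_nat_recr //= IH; lia.
Qed.

Lemma vn_sum n a h j : (h <= n)%N -> (j <= a * h)%N -> \sum_(l < n) @vn n a h j l = j.
Proof.
move=> hn ja.
pose F := fun l : nat => if (l < h)%N then minn a (j - a * l) else 0.
have -> : \sum_(l < n) @vn n a h j l = \sum_(l < n) F l by [].
rewrite -(big_mkord xpredT F) (big_cat_nat _ (n:=h)) //= /F.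
rewrite [X in _ + X](_ : _ = 0) ?addn0; last first.
  rewrite big_nat_cond big1 // => l /andP [/andP [hl _] _]; by rewrite ltnNge hl.
rewrite big_nat_cond (eq_bigr (fun l => minn a (j - a * l))); last first.
  by move=> l /andP [/andP [_ hl] _]; rewrite hl.
rewrite -big_nat_cond sum_min; lia.
Qed.

Lemma card_lt p q : (#|[pred l : 'I_p | (l < q)%N]| <= q)%N.
Proof.
case: q => [|q]; first by rewrite eq_card0 // => l; rewrite !inE ltn0.
apply: leq_trans (_ : #|(predT : pred 'I_q.+1)| <= q.+1)%N; last by rewrite card_ord.
apply: (@inj_card _ _ _ _ (fun l : 'I_p => (inord l : 'I_q.+1))) => // x y.
rewrite !inE => hx hy /(congr1 (@nat_of_ord _)); rewrite !inordK // => H; exact: val_inj.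
Qed.

Lemma card_ge p q : (#|[pred c : 'I_p | (p - q <= c)%N]| <= q)%N.
Proof.
case: q => [|q].
  rewrite eq_card0 // => l; rewrite !inE subn0; apply/negbTE; rewrite -ltnNge; exact: ltn_ord.
apply: leq_trans (_ : #|(predT : pred 'I_q.+1)| <= q.+1)%N; last by rewrite card_ord.
apply: (@inj_card _ _ _ _ (fun l : 'I_p => (inord (l - (p - q.+1)) : 'I_q.+1))) => // x y.
rewrite !inE => hx hy /(congr1 (@nat_of_ord _)); rewrite !inordK; try (have := ltn_ord x; have := ltn_ord y; lia).
move=> H; apply: val_inj => /=; lia.
Qed.

Definition emb (n k : nat) (f : {ffun 'I_n -> 'I_(k.*2.+1)}) : vec n :=
  [ffun i => (Posz (f i) - Posz k)%R].

Lemma emb_inj n k : injective (@emb n k).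
Proof.
move=> f g E; apply/ffunP => i; apply: val_inj.
have := congr1 (fun F : vec n => F i) E; rewrite /emb !ffunE /=; lia.
Qed.

Lemma box_countE n (C : pred (vec n)) k :
  box_count C k = #|[pred f : {ffun 'I_n -> 'I_(k.*2.+1)} | C (emb f)]|.
Proof. by []. Qed.

Definition sh (n a h k j : nat) (f : {ffun 'I_n -> 'I_(k.*2.+1)}) : {ffun 'I_n -> 'I_(k.*2.+1)} :=
  [ffun i => (inord (f i + @vn n a h j i) : 'I_(k.*2).+1)].

Lemma sh_val n a h k t j (f : {ffun 'I_n -> 'I_(k.*2.+1)}) i : (f i + @vn n a h t i < k.*2.+1)%N -> (j <= t)%N ->
  (@sh n a h k j f i : nat) = f i + vn a h j i.
Proof.
move=> H jt; rewrite /sh ffunE inordK //.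
have := @vn_mono n a h j t i jt; lia.
Qed.

Lemma aed_count (n a h t k : nat) (C : pred (vec n)) :
  (h <= n)%N -> (t <= a * h)%N -> AED a h t C ->
  (box_count C k * t.+1 <= k.*2.+1 ^ n + t.+1 * (h * (a * k.*2.+1 ^ n.-1)))%N.
Proof.
move=> hhn hta aed.
set m := k.*2.+1.
pose T := {ffun 'I_n -> 'I_(k.*2.+1)}.
pose G := [pred f : T | C (emb f) && [forall i, (f i + vn a h t i < m)%N]].
pose U := [pred f : T | [exists l : 'I_n, (l < h)%N && (m - a <= f l)%N]].
have H1 : (#|G| * t.+1 <= m ^ n)%N.
  have -> : (#|G| * t.+1 = #|[pred p : T * 'I_t.+1 | G p.1]|)%N.
    rewrite -[X in (_ * X)%N]card_ord -[X in (_ * X)%N]cardsT.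
    rewrite -(@cardsE _ G) -cardsX; apply: eq_card => p; rewrite !inE andbT.
    by [].
  have -> : (m ^ n = #|(predT : pred T)|)%N by rewrite card_ffun !card_ord.
  apply: (@inj_card _ _ _ _ (fun p : T * 'I_t.+1 => sh a h p.2 p.1)) => //.
  move=> [f i] [g j]; rewrite !inE /= => /andP [Cf /forallP Ff] /andP [Cg /forallP Fg] E.
  have key : forall l, (f l + vn a h i l = g l + vn a h j l)%N.
    move=> l; have := congr1 (fun F : T => nat_of_ord (F l)) E => /=.
    by rewrite (sh_val (t:=t)) ?(Ff l) ?(sh_val (t:=t)) ?(Fg l) //; rewrite -ltnS.
  suff : f = g /\ i = j by case => -> ->.
  wlog ij : f g i j Cf Ff Cg Fg key {E} / (i <= j)%N.
    move=> W; case: (leqP i j) => [|/ltnW] ij; first exact: W.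
    by have [-> ->] := W g f j i Cg Fg Cf Ff (fun l => esym (key l)) ij.
  case: (ltngtP i j) ij => // [ij _|/val_inj ij _]; last first.
    subst j; split => //; apply/ffunP => l; apply: val_inj; apply: (@addIn (vn a h i l)); exact: key l.
  exfalso.
  have D : forall l, (emb f l - emb g l = Posz (vn a h j l) - Posz (vn a h i l))%R.
    move=> l; rewrite /emb !ffunE; have := key l; move: (vn a h i l) (vn a h j l) (nat_of_ord (f l)) (nat_of_ord (g l)) => p q x y. lia.
  have Hsum : (\sum_(l < n) (emb f l - emb g l) = Posz j - Posz i)%R.
    rewrite (eq_bigr _ (fun l _ => D l)) sumrB.
    rewrite -!(big_morph Posz PoszD (erefl (Posz 0))).
    rewrite !vn_sum //; apply: leq_trans hta; rewrite -ltnS //.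
  have Hout : Out a h t (emb g) (emb f).
    split; [|split].
    - move=> l; rewrite D; have := @vn_mono n a h i j l (ltnW ij); have := @vn_le n a h j l; lia.
    - apply: leq_trans (card_lt n h); apply: subset_leq_card; apply/subsetP => l.
      rewrite !inE => H; apply: (@vn_supp n a h j); apply/eqP => H2.
      have H3 : vn a h i l = 0 by have := @vn_mono n a h i j l (ltnW ij); rewrite H2 leqn0 => /eqP.
      by have := D l; rewrite H2 H3 subrr => /eqP; rewrite subr_eq0 (negbTE H).
    - rewrite Hsum; have := ltn_ord j; lia.
  have Hne : emb f != emb g.
    apply/eqP => Efg; move: Hsum; rewrite Efg (eq_bigr (fun _ => 0%R)); last by move=> l _; rewrite subrr.
    rewrite big1 // => /eqP; lia.
  by have := aed _ _ Cg Hout Hne; rewrite Cf.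
have H2 : (#|[pred f : T | C (emb f)]| <= #|G| + #|U|)%N.
  rewrite -cardUI; apply: leq_trans (leq_addr _ _); apply: subset_leq_card.
  apply/subsetP => f; rewrite !inE => Cf; rewrite Cf /=.
  case: (boolP [forall i, _]) => //= /forallPn [l]; rewrite -leqNgt => Hl.
  apply/existsP; exists l; apply/andP; split.
    apply: (@vn_supp n a h t); apply/eqP => H0; move: Hl; rewrite H0 addn0 leqNgt ltn_ord //.
  have := @vn_le n a h t l; have := ltn_ord (f l); lia.
have H3 : (#|U| <= h * (a * m ^ n.-1))%N.
  apply: leq_trans (union_bound (fun l : 'I_n => (l < h)%N) (fun l (f : T) => (m - a <= f l)%N)) _.
  rewrite (eq_bigr (fun _ => #|[pred c : 'I_m | (m - a <= c)%N]| * m ^ n.-1)%N); last first.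
    move=> l _; rewrite -(card_coord l [pred c : 'I_m | (m - a <= c)%N]); apply: eq_card => f; by rewrite !inE.
  rewrite sum_nat_const; apply: leq_mul; first exact: card_lt.
  by apply: leq_mul => //; exact: card_ge.
rewrite box_countE.
apply: leq_trans (leq_mul H2 (leqnn t.+1)) _; rewrite mulnDl; apply: leq_add H1 _.
rewrite mulnC; exact: leq_mul (leqnn _) H3.
Qed.

Lemma cnt_lower (n t k : nat) : (0 < n)%N ->
  (k.*2.+1 ^ n <= box_count (Cnt n t) k * t.+1 + t * k.*2.+1 ^ n.-1)%N.
Proof.
move=> hn.
set m := k.*2.+1.
pose i0 : 'I_n := Ordinal hn.
pose T := {ffun 'I_n -> 'I_(k.*2.+1)}.
pose S (f : T) := (\sum_(i < n) emb f i)%R.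
pose r (f : T) : nat := `|(modz (S f) (Posz t.+1))|%N.
have hr : forall f, (r f < t.+1)%N /\ Posz (r f) = (modz (S f) (Posz t.+1)).
  move=> f; have h1 := @modz_ge0 (S f) (Posz t.+1) isT.
  have h2 := @ltz_pmod (S f) (Posz t.+1) isT.
  rewrite /r; split; lia.
pose D := [pred f : T | (t <= f i0)%N].
pose down (f : T) : T := [ffun i => if i == i0 then (inord (f i - r f) : 'I_(k.*2).+1) else f i].
have H1 : (#|D| <= box_count (Cnt n t) k * t.+1)%N.
  have -> : (box_count (Cnt n t) k * t.+1 = #|[pred p : T * 'I_t.+1 | Cnt n t (emb p.1)]|)%N.
    rewrite box_countE -[X in (_ * X)%N]card_ord -[X in (_ * X)%N]cardsT.
    rewrite -(@cardsE _ [pred f : T | Cnt n t (emb f)]) -cardsX; apply: eq_card => p; rewrite !inE andbT.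
    by [].
  apply: (@inj_card _ _ _ _ (fun f : T => (down f, (inord (r f) : 'I_t.+1)))).
    move=> f g; rewrite !inE => Df Dg [E1 /(congr1 (@nat_of_ord _))].
    have [rf _] := hr f; have [rg _] := hr g.
    rewrite !inordK // => Er.
    apply/ffunP => i; apply: val_inj.
    have := congr1 (fun F : T => nat_of_ord (F i)) E1; rewrite /down !ffunE /=.
    case: eqP => [->|_] //.
    rewrite !inordK; last 2 first.
    - exact: leq_ltn_trans (leq_subr _ _) (ltn_ord _).
    - exact: leq_ltn_trans (leq_subr _ _) (ltn_ord _).
    move: Df Dg; rewrite -Er /= => Df Dg; move: (nat_of_ord (f i0)) (nat_of_ord (g i0)) Df Dg => x y.
    have : (r f <= t)%N by [].
    move: (r f) => z; lia.
  move=> f; rewrite !inE /= => Df.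
  rewrite /Cnt /=.
  have [rf rfE] := hr f.
  have -> : (\sum_(i < n) emb (down f) i = S f - Posz (r f))%R.
    rewrite /S (bigD1 i0) //= [X in (_ = X - _)%R](bigD1 i0) //=.
    have -> : (\sum_(i < n | i != i0) emb (down f) i = \sum_(i < n | i != i0) emb f i)%R.
      apply: eq_bigr => i /negbTE ni; by rewrite /emb /down !ffunE ni.
    rewrite /emb /down !ffunE eqxx inordK; last exact: leq_ltn_trans (leq_subr _ _) (ltn_ord _).
    move: (\sum_(i < n | i != i0) _)%R => s.
    have : (r f <= f i0)%N by apply: leq_trans Df; rewrite -ltnS.
    move: (r f) (nat_of_ord (f i0)) => z x; lia.
  rewrite rfE {1}(divz_eq (S f) (Posz t.+1)) addrK.
  exact: dvdz_mull (dvdzz _).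
have H2 : (#|(predT : pred T)| <= #|D| + #|[pred f : T | (f i0 < t)%N]|)%N.
  rewrite -cardUI; apply: leq_trans (leq_addr _ _); apply: subset_leq_card.
  apply/subsetP => f _; rewrite !inE; case: leqP => //.
have H3 : (#|[pred f : T | (f i0 < t)%N]| <= t * m ^ n.-1)%N.
  rewrite (card_coord i0 [pred c : 'I_m | (c < t)%N]); apply: leq_mul => //; exact: card_lt.
have H0 : (#|(predT : pred T)| = m ^ n)%N by rewrite card_ffun !card_ord.
rewrite -H0; apply: leq_trans H2 _; exact: leq_add H1 H3.
Qed.

Lemma part1 (n a h t : nat) : AED a h t (Cnt n t).
Proof.
move=> x y Cx [Hb [_ Hs]] yx; apply/negP => Cy.
set s := (\sum_(i < n) (y i - x i))%R in Hs.
have es : s = ((\sum_(i < n) y i) - (\sum_(i < n) x i))%R by rewrite /s sumrB.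
have ds : s \in dvdz (Posz t.+1) by rewrite es rpredB.
have [i yi] : exists i, y i != x i.
  case: (pickP [pred i | y i != x i]) => [i /= H|H]; first by exists i.
  by case/eqP: yx; apply/ffunP => i; move: (H i) => /= /negbFE /eqP.
have spos : (0 < s)%R.
  rewrite /s (bigD1 i) //=.
  have h1 : (0 <= \sum_(j < n | j != i) (y j - x j))%R.
    by apply: sumr_ge0 => j _; case: (Hb j).
  have [h2 _] := Hb i.
  have h3 : (y i - x i)%R <> 0%R by apply/eqP; rewrite subr_eq0.
  apply: (lt_le_trans _ (lerD (lexx _) h1)); rewrite addr0; lia.
move: ds => /dvdn_leq.
have : (0 < `|s|)%N by lia.
move=> H /(_ H) => H2.
lia.
Qed.

Section Real.
Local Open Scope R_scope.

Lemma real_up c T mm M c0 : 0 < T -> 0 < mm -> 0 < M ->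
  c * T <= mm * M + T * (c0 * M) -> c / (mm * M) <= / T + c0 / mm.
Proof.
move=> hT hm hM H; unfold Rdiv.
replace (/ T + c0 * / mm) with ((mm * M + T * (c0 * M)) * / (T * (mm * M))) by (field; lra).
replace (c * / (mm * M)) with ((c * T) * / (T * (mm * M))) by (field; lra).
apply Rmult_le_compat_r; [left; apply Rinv_0_lt_compat; apply Rmult_lt_0_compat; [lra|nra] | assumption].
Qed.

Lemma real_low c T mm M : 0 < T -> 0 < mm -> 0 < M ->
  mm * M <= c * T + T * M -> / T - / mm <= c / (mm * M).
Proof.
move=> hT hm hM H; unfold Rdiv.
replace (/ T - / mm) with ((mm * M - T * M) * / (T * (mm * M))) by (field; lra).
replace (c * / (mm * M)) with ((c * T) * / (T * (mm * M))) by (field; lra).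
apply Rmult_le_compat_r; [left; apply Rinv_0_lt_compat; apply Rmult_lt_0_compat; [lra|nra] | lra].
Qed.

Lemma tend_bound K eps : 0 < eps -> 0 <= K ->
  exists N : nat, forall k : nat, (N <= k)%coq_nat -> K / (INR k + 1) < eps.
Proof.
move=> he hK.
have [N [HN HN0]] := archimed_cor1 (eps / (K + 1)) ltac:(apply Rdiv_lt_0_compat; lra).
exists N => k Hk.
have hN : 0 < INR N by apply lt_0_INR.
have hk : INR N <= INR k by apply le_INR.
have h1 : K / (INR k + 1) <= (K + 1) * / INR N.
  unfold Rdiv; apply Rmult_le_compat; try lra.
  - left; apply Rinv_0_lt_compat; lra.
  - apply Rinv_le_contravar; lra.
apply: Rle_lt_trans h1 _.
replace eps with ((K + 1) * (eps / (K + 1))) by (field; lra).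
apply Rmult_lt_compat_l; lra.
Qed.

Lemma INR_m k : INR k + 1 <= INR (k.*2.+1).
Proof. rewrite -S_INR; apply le_INR; apply/ssrnat.leP; lia. Qed.

Lemma INR_mul x y : INR (x * y)%N = INR x * INR y.
Proof. exact: mult_INR. Qed.
Lemma INR_add x y : INR (x + y)%N = INR x + INR y.
Proof. exact: plus_INR. Qed.
Lemma natR x y : (x <= y)%N -> INR x <= INR y.
Proof. move/ssrnat.leP; exact: le_INR. Qed.

Lemma ratio_up n a h t k (C : pred (vec n)) : (0 < n)%N -> (h <= n)%N -> (t <= a * h)%N ->
  AED a h t C -> box_ratio C k <= / INR t.+1 + INR (h * a)%N / (INR k + 1).
Proof.
move=> hn hhn hta aed.
have Hn := aed_count k hhn hta aed.
rewrite [(h * (a * _))%N]mulnA in Hn.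
move: Hn; set cnt := box_count C k; set m := k.*2.+1; set Mn := (m ^ n.-1)%N => Hn.
have E : (m ^ n = m * Mn)%N by rewrite /Mn -expnS prednK.
rewrite /box_ratio -/cnt -/m E INR_mul.
rewrite E in Hn.
have hM : 0 < INR Mn by apply lt_0_INR; apply/ssrnat.ltP; rewrite /Mn expn_gt0.
have hT : 0 < INR t.+1 by apply lt_0_INR; apply/ssrnat.ltP.
have hm1 := INR_m k. have hk := pos_INR k.
have H : INR cnt * INR t.+1 <= INR m * INR Mn + INR t.+1 * (INR (h * a) * INR Mn).
  by rewrite -!INR_mul -INR_add; apply: natR.
apply: Rle_trans (real_up hT _ hM H) _; first (apply lt_0_INR; rewrite /m; lia).
apply Rplus_le_compat_l; unfold Rdiv; apply Rmult_le_compat_l; first apply pos_INR.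
apply Rinv_le_contravar; rewrite /m; lra.
Qed.

Lemma ratio_low n t k : (0 < n)%N ->
  / INR t.+1 - 1 / (INR k + 1) <= box_ratio (Cnt n t) k.
Proof.
move=> hn.
have Hn := cnt_lower t k hn.
move: Hn; set cnt := box_count (Cnt n t) k; set m := k.*2.+1; set Mn := (m ^ n.-1)%N => Hn.
have E : (m ^ n = m * Mn)%N by rewrite /Mn -expnS prednK.
rewrite /box_ratio -/cnt -/m E INR_mul.
rewrite E in Hn.
have hM : 0 < INR Mn by apply lt_0_INR; apply/ssrnat.ltP; rewrite /Mn expn_gt0.
have hT : 0 < INR t.+1 by apply lt_0_INR; apply/ssrnat.ltP.
have hm1 := INR_m k. have hk := pos_INR k.
have H : INR m * INR Mn <= INR cnt * INR t.+1 + INR t * INR Mn.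
  by rewrite -!INR_mul -INR_add; apply: natR.
have htt : INR t <= INR t.+1 by apply le_INR; apply/ssrnat.leP.
apply: Rle_trans (real_low (c := INR cnt) hT _ hM _); last first.
- nra.
- apply lt_0_INR; rewrite /m; lia.
apply Rplus_le_compat_l; apply Ropp_le_contravar.
unfold Rdiv; rewrite Rmult_1_l.
apply Rinv_le_contravar; rewrite /m; lra.
Qed.

Lemma density_Cnt n a h t : (0 < n)%N -> (h <= n)%N -> (t <= a * h)%N ->
  Un_cv (box_ratio (Cnt n t)) (/ INR t.+1).
Proof.
move=> hn hhn hta eps he.
have hK : 0 <= INR (h * a)%N + 1 by have := pos_INR (h * a)%N; lra.
have [N HN] := tend_bound he hK.
exists N => k Hk.
have up := ratio_up k hn hhn hta (@part1 n a h t).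
have low := ratio_low t k hn.
have HK := HN k Hk.
have hk := pos_INR k.
have hc := pos_INR (h * a)%N.
move: up low HK; unfold Rdiv, R_dist.
set q := / (INR k + 1).
have hq : 0 < q by apply Rinv_0_lt_compat; lra.
move=> up low HK.
apply Rabs_def1; nra.
Qed.

Lemma limsup_bound n a h t (C : pred (vec n)) d : (0 < n)%N -> (h <= n)%N -> (t <= a * h)%N ->
  AED a h t C -> is_limsup (box_ratio C) d -> d <= / INR t.+1.
Proof.
move=> hn hhn hta aed [S [Hlub Hcv]].
apply Rnot_lt_le => Hlt.
have he : 0 < (d - / INR t.+1) / 2 by lra.
have [N1 HN1] := Hcv _ he.
have hc := pos_INR (h * a)%N.
have [N2 HN2] := tend_bound he hc.
pose N := Nat.max N1 N2.
have h1 := HN1 N (Nat.le_max_l N1 N2).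
have h2 := HN2 N (Nat.le_max_r N1 N2).
have hN := pos_INR N.
have h3 : S N <= / INR t.+1 + INR (h * a)%N / (INR N + 1).
  apply (proj2 (Hlub N)) => r [k [Hk ->]].
  apply: Rle_trans (ratio_up k hn hhn hta aed) _.
  apply Rplus_le_compat_l; unfold Rdiv; apply Rmult_le_compat_l => //.
  have := le_INR _ _ Hk; move=> hk.
  apply Rinv_le_contravar; lra.
move: h1; unfold R_dist => h1.
have := Rabs_def2 _ _ h1; lra.
Qed.
End Real.

Theorem theorem2 (n a h t : nat)
  (hn : leq 1 n) (ha : leq 1 a) (hh : leq 1 h) (ht : leq 1 t)
  (hhn : leq h n) (hat : leq a t) (hta : leq t (muln a h)) :
  AED a h t (Cnt n t) /\
  has_density (Cnt n t) (Rinv (INR (S t))) /\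
  (forall (C : pred (vec n)) (d : R),
      AED a h t C -> is_upper_density C d -> Rle d (Rinv (INR (S t)))).
Proof.
split; first exact: part1.
split; first exact: (density_Cnt hn hhn hta).
move=> C d aed hl; exact: (limsup_bound hn hhn hta aed hl).
Qed.
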